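(* A partial function $f$ on $\{0,1\}^n$ is not submodular-extendable if and only if $f$ contains a path certificate.
   Context: Identify $\{0,1\}^n$ with subsets of $[n]$; the hypercube graph has edges $(S,S+i)$ for $i\notin S$. A partial function $f$ is a real-valued function on a subset $\mathcal{D}=\mathrm{D}(f)\subseteq\{0,1\}^n$; it is submodular-extendable if some submodular $g:2^{[n]}\to\mathbb{R}$ (i.e. $g(S+i)-g(S)\ge g(T+i)-g(T)$ whenever $S\subseteq T$, $i\notin T$) agrees with $f$ on $\mathcal{D}$. For hypercube edges $e=(S,S+i)$ and $e'=(T,T+j)$ write $e\preceq e'$ if $i=j$ and $S\subseteq T$. Consider a finite collection $\mathbf{P}$ of directed paths in the hypercube graph, each being either a directed cycle or a directed path whose two endpoints lie in $\mathcal{D}$. A traversed edge is upward if it is traversed from the smaller set to the larger and downward otherwise. Let $\mathbf{U}$ (resp. $\mathbf{D}$) be the multiset of upward (resp. downward) edge traversals in $\mathbf{P}$, counted with multiplicity. $\mathbf{P}$ is matched if there is a perfect matching between $\mathbf{U}$ and $\mathbf{D}$ in which each upward edge $e$ is matched to a downward edge $e'$ with $e\preceq e'$. The value of a path from $S\in\mathcal{D}$ to $S'\in\mathcal{D}$ is $f(S')-f(S)$, cycles have value $0$, and the value of $\mathbf{P}$ is the sum of the values of its members. A path certificate for $f$ is a matched collection $\mathbf{P}$ of negative value. *)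

(* Defs.v *)
From HB Require Import structures.
From mathcomp Require Import all_boot all_order all_algebra.
Set Implicit Arguments. Unset Strict Implicit. Unset Printing Implicit Defensive.
Import Order.TTheory GRing.Theory Num.Theory.
Local Open Scope ring_scope.

(* Vertices of the hypercube {0,1}^n are subsets of [n] = 'I_n. *)
Notation vertex n := {set 'I_n}.

(* A hypercube edge (S, S+i) with i \notin S is represented by the pair (S, i). *)
Definition edge n := (vertex n * 'I_n)%type.

Definition edge_le n (e e' : edge n) : bool := (e.2 == e'.2) && (e.1 \subset e'.1).

Definition submodular (R : realFieldType) n (g : vertex n -> R) : Prop :=
  forall (S T : vertex n) (i : 'I_n), S \subset T -> i \notin T ->
    g (i |: T) - g T <= g (i |: S) - g S.

(* A partial function: domain D, values f on D (values of f outside D are irrelevant). *)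
Definition submodular_extendable (R : realFieldType) n (D : {set vertex n})
    (f : vertex n -> R) : Prop :=
  exists g : vertex n -> R, submodular g /\ forall S, S \in D -> g S = f S.

Definition toggle n (x : vertex n) (i : 'I_n) : vertex n :=
  if i \in x then x :\ i else i |: x.

(* A directed walk in the hypercube graph is given by its start vertex and
   the sequence of coordinates flipped along the way. *)
Definition walk n := (vertex n * seq 'I_n)%type.

Definition wend n (w : walk n) : vertex n := foldl (@toggle n) w.1 w.2.

(* The traversed edges: (true, e) = upward traversal of e, (false, e) = downward. *)
Fixpoint traversals n (x : vertex n) (s : seq 'I_n) : seq (bool * edge n) :=
  match s with
  | [::] => [::]
  | i :: s' => (i \notin x, (x :\ i, i)) :: traversals (toggle x i) s'
  end.

Definition wtrav n (w : walk n) := traversals w.1 w.2.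

Definition up_edges n (P : seq (walk n)) : seq (edge n) :=
  flatten [seq [seq t.2 | t <- wtrav w & t.1] | w <- P].
Definition down_edges n (P : seq (walk n)) : seq (edge n) :=
  flatten [seq [seq t.2 | t <- wtrav w & ~~ t.1] | w <- P].

Definition matched n (P : seq (walk n)) : Prop :=
  exists Dm : seq (edge n), perm_eq Dm (down_edges P) /\ all2 (@edge_le n) (up_edges P) Dm.

Definition is_cycle n (w : walk n) : bool := wend w == w.1.

Definition admissible n (D : {set vertex n}) (P : seq (walk n)) : bool :=
  all (fun w => is_cycle w || ((w.1 \in D) && (wend w \in D))) P.

Definition walk_value (R : realFieldType) n (f : vertex n -> R) (w : walk n) : R :=
  if is_cycle w then 0 else f (wend w) - f w.1.

Definition value (R : realFieldType) n (f : vertex n -> R) (P : seq (walk n)) : R :=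
  \sum_(w <- P) walk_value f w.

Definition path_certificate (R : realFieldType) n (D : {set vertex n})
    (f : vertex n -> R) (P : seq (walk n)) : Prop :=
  admissible D P /\ matched P /\ value f P < 0.

(* Main.v *)
Require Import Defs.
From HB Require Import structures.
From mathcomp Require Import all_boot all_order all_algebra.
From Stdlib Require Import Classical.
From mathcomp Require Import ring lra.
Set Implicit Arguments. Unset Strict Implicit. Unset Printing Implicit Defensive.
Import Order.TTheory GRing.Theory Num.Theory.
Local Open Scope ring_scope.

Section Walks.
Variable n : nat.
Implicit Types (x : vertex n) (s : seq 'I_n) (w : walk n).

Lemma setD1_notin x i : i \notin x -> x :\ i = x.
Proof.
move=> Hi; apply/setP=> y; rewrite !inE; case: eqP => // ->.
by rewrite (negbTE Hi).
Qed.

Lemma traversals_cat x s1 s2 :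
  traversals x (s1 ++ s2) = traversals x s1 ++ traversals (foldl (@toggle n) x s1) s2.
Proof. by elim: s1 x => [|i s1 IH] x //=; rewrite IH. Qed.

Lemma traversals_edge x s t : t \in traversals x s -> t.2.2 \notin t.2.1.
Proof.
elim: s x => [|i s IH] x //=; rewrite inE => /orP[/eqP -> /=|/IH //].
by rewrite !inE eqxx.
Qed.

Variable R : realFieldType.
Variable g : vertex n -> R.
Definition Dl (e : edge n) : R := g (e.2 |: e.1) - g e.1.
Definition sD (t : bool * edge n) : R := if t.1 then Dl t.2 else - Dl t.2.

Lemma telescope x s :
  \sum_(t <- traversals x s) sD t = g (foldl (@toggle n) x s) - g x.
Proof.
elim: s x => [|i s IH] x /=; first by rewrite big_nil subrr.
rewrite big_cons IH /sD /Dl /= /toggle.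
case Hi: (i \in x) => /=.
  by rewrite setD1K // opprB addrC addrA subrK.
by rewrite setD1_notin ?Hi // addrC addrA subrK.
Qed.

Lemma walk_sum w :
  \sum_(e <- [seq t.2 | t <- wtrav w & t.1]) Dl e -
  \sum_(e <- [seq t.2 | t <- wtrav w & ~~ t.1]) Dl e = g (wend w) - g w.1.
Proof.
rewrite /wend -telescope -/(wtrav w) !big_map !big_filter.
rewrite [RHS](bigID (fun t : bool * edge n => t.1)) /= -sumrN; congr (_ + _).
  by apply: eq_bigr => t; rewrite /sD => ->.
by apply: eq_bigr => t /negPf; rewrite /sD => ->.
Qed.

Lemma edges_sum (P : seq (walk n)) :
  \sum_(e <- up_edges P) Dl e - \sum_(e <- down_edges P) Dl e =
  \sum_(w <- P) (g (wend w) - g w.1).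
Proof.
elim: P => [|w P IH]; first by rewrite /up_edges /down_edges /= !big_nil subrr.
rewrite big_cons -IH -walk_sum /up_edges /down_edges /= !big_cat /=.
rewrite opprD !addrA; congr (_ + _); rewrite -!addrA; congr (_ + _).
by rewrite addrC.
Qed.

Lemma down_edges_ok (P : seq (walk n)) e : e \in down_edges P -> e.2 \notin e.1.
Proof.
move=> /flattenP[s /mapP[w _ ->] /mapP[t]]; rewrite mem_filter => /andP[_ Ht] ->.
exact: traversals_edge Ht.
Qed.

Lemma all2_sum (s Dm : seq (edge n)) : submodular g ->
  all2 (@edge_le n) s Dm -> (forall e, e \in Dm -> e.2 \notin e.1) ->
  \sum_(e <- Dm) Dl e <= \sum_(e <- s) Dl e.
Proof.
move=> Hg; elim: s Dm => [|a s IH] [|b Dm] //=; rewrite /edge_le.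
move=> /andP[/andP[/eqP Hab Hsub] Hall] Hok.
rewrite !big_cons lerD //; last by apply: IH => // e He; apply: Hok; rewrite inE He orbT.
rewrite /Dl Hab; apply: Hg => //; rewrite -Hab.
have := Hok b; rewrite inE eqxx => /(_ isT); by rewrite Hab.
Qed.

End Walks.

Lemma walk_value_eq (R : realFieldType) n (f : vertex n -> R) (w : walk n) :
  walk_value f w = f (wend w) - f w.1.
Proof. by rewrite /walk_value /is_cycle; case: eqP => [->|]; rewrite ?subrr. Qed.

Lemma soundness (R : realFieldType) n (D : {set vertex n}) (f : vertex n -> R) P :
  path_certificate D f P -> ~ submodular_extendable D f.
Proof.
move=> [Had [[Dm [Hperm Hall]] Hneg]] [g [Hg HgD]].
suff : 0 <= value f P by rewrite leNgt Hneg.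
have -> : value f P = \sum_(w <- P) (g (wend w) - g w.1).
  rewrite /value big_seq_cond [RHS]big_seq_cond; apply: eq_bigr => w /andP[Hw _].
  rewrite walk_value_eq; move/allP: Had => /(_ w Hw) /orP[/eqP ->|/andP[H1 H2]].
    by rewrite !subrr.
  by rewrite !HgD.
rewrite -edges_sum subr_ge0 -(perm_big _ Hperm) /=.
apply: all2_sum => // e He; apply: (@down_edges_ok n P).
by rewrite -(perm_mem Hperm).
Qed.

Section Rearr.
Variable n : nat.
Implicit Types (P : seq (walk n)) (w : walk n).

Definition bnd P : {ffun vertex n -> int} :=
  [ffun v => \sum_(w <- P) (((wend w == v) : nat)%:Z - ((w.1 == v) : nat)%:Z)].

Definition matched' P : Prop :=
  exists M : seq (edge n * edge n), all (fun p => edge_le p.1 p.2) M /\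
    perm_eq (map fst M) (up_edges P) /\ perm_eq (map snd M) (down_edges P).

Definition ups w := [seq t.2 | t <- wtrav w & t.1].
Definition downs w := [seq t.2 | t <- wtrav w & ~~ t.1].

Lemma up_cons w P : up_edges (w :: P) = ups w ++ up_edges P. Proof. by []. Qed.
Lemma down_cons w P : down_edges (w :: P) = downs w ++ down_edges P. Proof. by []. Qed.
Lemma up_cat P Q : up_edges (P ++ Q) = up_edges P ++ up_edges Q.
Proof. by rewrite /up_edges map_cat flatten_cat. Qed.
Lemma down_cat P Q : down_edges (P ++ Q) = down_edges P ++ down_edges Q.
Proof. by rewrite /down_edges map_cat flatten_cat. Qed.

Lemma matched'_cat P Q : matched' P -> matched' Q -> matched' (P ++ Q).
Proof.
move=> [M1 [A1 [U1 D1]]] [M2 [A2 [U2 D2]]]; exists (M1 ++ M2).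
by rewrite all_cat A1 A2 up_cat down_cat !map_cat !perm_cat.
Qed.

Lemma matched'_perm P Q : perm_eq P Q -> matched' P -> matched' Q.
Proof.
move=> HPQ [M [A [U D]]]; exists M; split => //; split.
  by apply: (perm_trans U); apply: perm_flatten; apply: perm_map.
by apply: (perm_trans D); apply: perm_flatten; apply: perm_map.
Qed.

Lemma lift_perm (s : seq (edge n)) M : perm_eq (map fst M) s ->
  all (fun p => edge_le p.1 p.2) M ->
  exists Dm, perm_eq Dm (map snd M) /\ all2 (@edge_le n) s Dm.
Proof.
elim: s M => [|a s IH] M.
  by move=> /perm_size; case: M => // _ _; exists [::].
move=> Hp HA.
have : a \in map fst M by rewrite (perm_mem Hp) mem_head.
move=> /mapP[m Hm Ha].
have HM := perm_to_rem Hm.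
have Hp' : perm_eq (map fst (rem m M)) s.
  rewrite -(perm_cons a); apply: perm_trans Hp; rewrite perm_sym Ha.
  by have := perm_map fst HM.
have HA' : all (fun p => edge_le p.1 p.2) (rem m M).
  by apply/allP => p /mem_rem Hp0; move/allP: HA; apply.
have [Dm [HD Hall]] := IH _ Hp' HA'.
exists (m.2 :: Dm); split.
  rewrite perm_sym (perm_trans (perm_map snd HM)) //= perm_cons perm_sym //.
by rewrite /= Hall Ha (allP HA m Hm).
Qed.

Lemma matched'_matched P : matched' P -> matched P.
Proof.
move=> [M [A [U D]]].
have [Dm [HD Hall]] := lift_perm U A.
by exists Dm; split => //; apply: perm_trans D.
Qed.

Lemma bnd_cat P Q v : bnd (P ++ Q) v = bnd P v + bnd Q v.
Proof. by rewrite !ffunE big_cat. Qed.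

Lemma bnd_perm P Q : perm_eq P Q -> bnd P = bnd Q.
Proof. by move=> H; apply/ffunP => v; rewrite !ffunE (perm_big _ H). Qed.

Definition wcat w w' : walk n := (w.1, w.2 ++ w'.2).

Lemma wtrav_cat w w' : w'.1 = wend w -> wtrav (wcat w w') = wtrav w ++ wtrav w'.
Proof. by move=> H; rewrite /wtrav /= traversals_cat H. Qed.

Lemma wend_cat w w' : w'.1 = wend w -> wend (wcat w w') = wend w'.
Proof. by move=> H; rewrite /wend /= foldl_cat H. Qed.

Lemma ups_cat w w' : w'.1 = wend w -> ups (wcat w w') = ups w ++ ups w'.
Proof. by move=> H; rewrite /ups wtrav_cat // filter_cat map_cat. Qed.
Lemma downs_cat w w' : w'.1 = wend w -> downs (wcat w w') = downs w ++ downs w'.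
Proof. by move=> H; rewrite /downs wtrav_cat // filter_cat map_cat. Qed.

Lemma matched'_wcat w w' P : w'.1 = wend w ->
  matched' (w :: w' :: P) -> matched' (wcat w w' :: P).
Proof.
move=> H [M [A [U D]]]; exists M; split => //.
by rewrite up_cons down_cons ups_cat ?downs_cat // -!catA.
Qed.

Lemma bnd_wcat w w' P : w'.1 = wend w -> bnd (wcat w w' :: P) = bnd (w :: w' :: P).
Proof.
move=> H; apply/ffunP => v; rewrite !ffunE !big_cons wend_cat // H /=.
by rewrite addrA; congr (_ + _); rewrite addrC addrA subrK.
Qed.

Definition ncend v w := ~~ is_cycle w && (wend w == v).
Definition ncstart v w := ~~ is_cycle w && (w.1 == v).

Lemma bnd_count P v : bnd P v = (count (ncend v) P)%:Z - (count (ncstart v) P)%:Z.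
Proof.
rewrite ffunE; elim: P => [|w P IH]; first by rewrite big_nil.
rewrite big_cons IH /= /ncend /ncstart /=.
case: (boolP (is_cycle w)) => Hc /=.
  by move/eqP: Hc => ->; rewrite subrr add0r.
rewrite !PoszD; set a := ((_ == v) : nat); set b := ((_ == v) : nat).
by rewrite opprD addrACA.
Qed.

End Rearr.

Section Rearr2.
Variable n : nat.
Implicit Types (P : seq (walk n)) (w : walk n).

Lemma count_eq P v : bnd P v = 0 -> count (ncend v) P = count (ncstart v) P.
Proof. by rewrite bnd_count => /eqP; rewrite subr_eq0 eqz_nat => /eqP. Qed.

Lemma rearrange P : matched' P -> exists P', matched' P' /\ bnd P' = bnd P /\
  (forall w, w \in P' -> ~~ is_cycle w -> bnd P (wend w) != 0 /\ bnd P w.1 != 0).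
Proof.
have [k] := ubnP (size P); elim: k P => [|k IH] P //.
move=> Hsz HM.
case: (boolP (has (fun w => ~~ is_cycle w && (bnd P (wend w) == 0)) P)).
  move=> /hasP[w Hw /andP[Hnc /eqP H0]].
  set X := wend w.
  have HP := perm_to_rem Hw.
  have Hce := count_eq H0.
  have E1 : count (ncend X) P = (count (ncend X) (rem w P)).+1.
    by rewrite ((permP HP) (ncend X)) /= /ncend Hnc eqxx.
  have E2 : count (ncstart X) P = count (ncstart X) (rem w P).
    rewrite ((permP HP) (ncstart X)) /= /ncstart Hnc /=.
    by move: Hnc; rewrite /is_cycle /X eq_sym => /negPf ->.
  have : has (ncstart X) (rem w P) by rewrite has_count -E2 -Hce E1.
  move=> /hasP[w' Hw' /andP[Hnc' /eqP Hs']].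
  set Q := rem w' (rem w P).
  have HP2 : perm_eq P (w :: w' :: Q).
    by apply: (perm_trans HP); rewrite perm_cons; apply: perm_to_rem.
  have Hb : bnd (wcat w w' :: Q) = bnd P.
    by rewrite bnd_wcat // (bnd_perm HP2).
  have HM' : matched' (wcat w w' :: Q).
    by apply: matched'_wcat => //; apply: matched'_perm HP2 HM.
  have Hsz' : (size (wcat w w' :: Q) < k)%N.
    by move: Hsz; rewrite (perm_size HP2).
  have [P' [H1 [H2 H3]]] := IH _ Hsz' HM'.
  by exists P'; rewrite H2 Hb; split => //; split => // w0; rewrite -Hb; apply: H3.
move=> /hasPn Hn; exists P; split => //; split => // w Hw Hnc.
have := Hn w Hw; rewrite Hnc /= => ->; split => //.
apply/negP => /eqP H0.
have : has (ncend w.1) P.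
  by rewrite has_count (count_eq H0) -has_count; apply/hasP; exists w => //; rewrite /ncstart Hnc /=.
move=> /hasP[w'' Hw'' /andP[Hnc'' /eqP He]].
by have := Hn w'' Hw''; rewrite Hnc'' He H0 eqxx.
Qed.

End Rearr2.

Section FM.
Variable R : realFieldType.
Variable V : finType.
Implicit Types (mu b : {ffun V -> int}) (g : V -> R).

Definition dot mu g : R := \sum_v (mu v)%:~R * g v.

Definition addf a b : {ffun V -> int} := [ffun v => a v + b v].
Definition scalef (c : int) a : {ffun V -> int} := [ffun v => c * a v].

Lemma K_scale (K : {ffun V -> int} -> Prop) :
  (forall a b, K a -> K b -> K (addf a b)) ->
  forall c a, 0 < c -> K a -> K (scalef c a).
Proof.
move=> Kadd [m|m] // a Hc Ha; case: m Hc => // m _.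
elim: m => [|m IH].
  by have -> : scalef 1 a = a by apply/ffunP => v; rewrite ffunE mul1r.
have -> : scalef (Posz m.+2) a = addf (scalef (Posz m.+1) a) a.
  by apply/ffunP => v; rewrite !ffunE -{3}(mul1r (a v)) -mulrDl -PoszD addn1.
exact: Kadd.
Qed.

Lemma dot_lin c d (a : {ffun V -> int}) b g :
  dot (addf (scalef c a) (scalef d b)) g = c%:~R * dot a g + d%:~R * dot b g.
Proof.
rewrite /dot !mulr_sumr -big_split /=; apply: eq_bigr => v _.
by rewrite !ffunE intrD !intrM; ring.
Qed.

Lemma dot_upd b g x u :
  dot b (fun v => if v == x then g x + u else g v) = dot b g + (b x)%:~R * u.
Proof.
rewrite /dot (bigD1 x) //= [in RHS](bigD1 x) //= eqxx.
rewrite (eq_bigr (fun v => (b v)%:~R * g v)); last by move=> v /negPf ->.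
ring.
Qed.

Lemma foldmax_ge (T : eqType) (s : seq T) (F : T -> R) a p :
  p \in s -> F p <= foldr (fun p acc => Order.max (F p) acc) a s.
Proof.
elim: s => [|q s IH] //=; rewrite inE => /orP[/eqP ->|/IH H]; rewrite le_max.
  by rewrite lexx.
by rewrite H orbT.
Qed.

Lemma foldmax_le (T : eqType) (s : seq T) (F : T -> R) a c :
  a <= c -> (forall p, p \in s -> F p <= c) ->
  foldr (fun p acc => Order.max (F p) acc) a s <= c.
Proof.
move=> Ha; elim: s => [|q s IH] //= H; rewrite ge_max H ?mem_head //=.
by apply: IH => p Hp; apply: H; rewrite inE Hp orbT.
Qed.

Lemma foldmin_le (T : eqType) (s : seq T) (F : T -> R) a p :
  p \in s -> foldr (fun p acc => Order.min (F p) acc) a s <= F p.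
Proof.
elim: s => [|q s IH] //=; rewrite inE => /orP[/eqP ->|/IH H]; rewrite ge_min.
  by rewrite lexx.
by rewrite H orbT.
Qed.

Lemma foldmin_le0 (T : eqType) (s : seq T) (F : T -> R) a :
  foldr (fun p acc => Order.min (F p) acc) a s <= a.
Proof. by elim: s => [|q s IH] //=; rewrite ge_min IH orbT. Qed.

Lemma FM k : forall (K : {ffun V -> int} -> Prop) (D : {set V}) (f : V -> R)
   (B : seq {ffun V -> int}),
  (forall a b, K a -> K b -> K (addf a b)) ->
  #|~: D| = k -> (forall b, b \in B -> K b) ->
  (forall mu, K mu -> (forall v, v \notin D -> mu v = 0) -> 0 <= dot mu f) ->
  exists g : V -> R, (forall v, v \in D -> g v = f v) /\
    forall b, b \in B -> 0 <= dot b g.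
Proof.
elim: k => [|k IH] K D f B Kadd Hk HB Hf.
  exists f; split => // b Hb; apply: Hf; first exact: HB.
  move=> v Hv; move/eqP: Hk; rewrite cards_eq0 => /eqP H.
  by have := in_setC v D; rewrite H inE Hv.
have /card_gt0P [x Hx] : (0 < #|~: D|)%N by rewrite Hk.
have HxD : x \notin D by rewrite -in_setC.
set comb := fun p q : {ffun V -> int} => addf (scalef (- q x) p) (scalef (p x) q).
set Bz := [seq b : {ffun V -> int} <- B | b x == 0].
set Bp := [seq b : {ffun V -> int} <- B | 0 < b x].
set Bn := [seq b : {ffun V -> int} <- B | b x < 0].
set B' := Bz ++ [seq comb p q | p <- Bp, q <- Bn].
set K' := fun mu => K mu /\ mu x = 0.
have K'add : forall a b, K' a -> K' b -> K' (addf a b).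
  by move=> a b [Ka Ha] [Kb Hb]; split; [apply: Kadd | rewrite ffunE Ha Hb].
have Hk' : #|~: (x |: D)| = k.
  have -> : ~: (x |: D) = (~: D) :\ x.
    by apply/setP => v; rewrite !inE negb_or andbC.
  by move: Hk; rewrite (cardsD1 x) Hx add1n => [[]].
have HB' : forall b, b \in B' -> K' b.
  move=> b; rewrite mem_cat => /orP[|/allpairsP[[p q] /= [Hp Hq ->]]].
    by rewrite mem_filter => /andP[/eqP H Hb]; split => //; apply: HB.
  move: Hp Hq; rewrite !mem_filter => /andP[Hpx Hp] /andP[Hqx Hq].
  split; last by rewrite /comb !ffunE mulrC mulrN addNr.
  apply: (Kadd _ _); apply: (K_scale Kadd) => //; try by apply: HB.
  by rewrite oppr_gt0.
have Hf' : forall mu, K' mu -> (forall v, v \notin x |: D -> mu v = 0) ->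
    0 <= dot mu f.
  move=> mu [Kmu Hmux] Hs; apply: Hf => // v Hv.
  case: (eqVneq v x) => [->|Hvx] //; apply: Hs.
  by rewrite !inE negb_or Hvx.
have [g' [Hg'D Hg'B]] := IH K' (x |: D) f B' K'add Hk' HB' Hf'.
set lo := fun p : {ffun V -> int} => - dot p g' / (p x)%:~R.
set up := fun q : {ffun V -> int} => dot q g' / (- q x)%:~R.
set m0 := foldr (fun q acc => Order.min (up q) acc) 0 Bn.
set u := foldr (fun p acc => Order.max (lo p) acc) m0 Bp.
have Hpair : forall p q, p \in Bp -> q \in Bn -> lo p <= up q.
  move=> p q Hp Hq.
  have : 0 <= dot (comb p q) g'.
    apply: Hg'B; rewrite mem_cat; apply/orP; right.
    by apply/allpairsP; exists (p, q).
  move: Hp Hq; rewrite !mem_filter => /andP[Hpx _] /andP[Hqx _].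
  rewrite dot_lin.
  have Ha : (0 : R) < (p x)%:~R by rewrite ltr0z.
  have Hc : (0 : R) < (- q x)%:~R by rewrite ltr0z oppr_gt0.
  have E1 : dot p g' = - lo p * (p x)%:~R by rewrite /lo mulNr divfK ?opprK // gt_eqF.
  have E2 : dot q g' = up q * (- q x)%:~R.
    by rewrite /up divfK // gt_eqF.
  rewrite E1 E2 => H.
  have : 0 <= ((p x)%:~R * (- q x)%:~R) * (up q - lo p).
    by move: H; rewrite intrN; set a := (p x)%:~R; set c := (q x)%:~R;
       set l := lo p; set r := up q => H; have -> : a * - c * (r - l) =
       - c * (- l * a) + a * (r * - c) by ring.
  by rewrite pmulr_rge0 ?mulr_gt0 // subr_ge0.
exists (fun v => if v == x then g' x + u else g' v); split.
  move=> v Hv; have Hvx : v != x by apply: contraNneq HxD => <-.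
  by rewrite (negPf Hvx) Hg'D // inE Hv orbT.
move=> b Hb; rewrite dot_upd.
have [Hbx|Hbx|Hbx] := ltgtP (b x) 0.
- have Hq : b \in Bn by rewrite mem_filter Hbx.
  have Hc : (0 : R) < (- b x)%:~R by rewrite ltr0z oppr_gt0.
  have : u <= up b.
    apply: foldmax_le; first exact: foldmin_le.
    by move=> p Hp; apply: Hpair.
  rewrite /up ler_pdivlMr // intrN => H.
  lra.
- have Hp : b \in Bp by rewrite mem_filter Hbx.
  have Ha : (0 : R) < (b x)%:~R by rewrite ltr0z.
  have : lo b <= u by apply: foldmax_ge.
  rewrite /lo ler_pdivrMr // => H.
  lra.
- rewrite Hbx mul0r addr0; apply: Hg'B.
  by rewrite mem_cat mem_filter Hbx eqxx Hb.
Qed.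

End FM.

Section Final.
Variable R : realFieldType.
Variable n : nat.
Implicit Types (P : seq (walk n)) (w : walk n).

Lemma intr_sum (I : Type) (r : seq I) (F : I -> int) :
  (\sum_(i <- r) F i)%:~R = \sum_(i <- r) ((F i)%:~R : R).
Proof. by apply: (big_morph (fun x : int => (x%:~R : R)) (@intrD R)). Qed.

Lemma sum_pick (e : vertex n) (g : vertex n -> R) :
  \sum_v ((((e == v) : nat)%:Z)%:~R * g v) = g e.
Proof.
rewrite (bigD1 e) //= eqxx big1 ?addr0; first by rewrite mulr1z mul1r.
by move=> v Hv; rewrite eq_sym (negPf Hv) mul0r.
Qed.

Lemma dot_bnd P (g : vertex n -> R) :
  dot (bnd P) g = \sum_(w <- P) (g (wend w) - g w.1).
Proof.
rewrite /dot (eq_bigr (fun v => \sum_(w <- P)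
   (((((wend w == v) : nat)%:Z - ((w.1 == v) : nat)%:Z)%:~R) * g v))); last first.
  by move=> v _; rewrite ffunE intr_sum mulr_suml.
rewrite exchange_big /=; apply: eq_bigr => w _.
rewrite (eq_bigr (fun v => (((wend w == v) : nat)%:Z)%:~R * g v -
                            (((w.1 == v) : nat)%:Z)%:~R * g v)); last first.
  by move=> v _; rewrite intrB mulrBl.
by rewrite sumrB !sum_pick.
Qed.

Lemma value_bnd (f : vertex n -> R) P : value f P = dot (bnd P) f.
Proof. by rewrite dot_bnd /value; apply: eq_bigr => w _; rewrite walk_value_eq. Qed.

Definition Kw (mu : {ffun vertex n -> int}) : Prop :=
  exists P, matched' P /\ bnd P = mu.

Lemma Kw_add a b : Kw a -> Kw b -> Kw (addf a b).
Proof.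
move=> [P [HP <-]] [Q [HQ <-]]; exists (P ++ Q); split; first exact: matched'_cat.
by apply/ffunP => v; rewrite bnd_cat [RHS]ffunE.
Qed.

Definition gen (S T : vertex n) (i : 'I_n) : seq (walk n) :=
  [:: (S, [:: i]); (i |: T, [:: i])].

Lemma gen_matched (S T : vertex n) (i : 'I_n) : S \subset T -> i \notin T -> matched' (gen S T i).
Proof.
move=> HST HiT.
have HiS : i \notin S by apply: contra HiT; apply: (subsetP HST).
exists [:: ((S, i), (T, i))]; split.
  by rewrite /= /edge_le /= eqxx HST.
rewrite /up_edges /down_edges /gen /wtrav /= HiS !inE eqxx /=.
by rewrite setD1_notin // setU1K.
Qed.

Lemma gen_dot (S T : vertex n) (i : 'I_n) (g : vertex n -> R) : S \subset T -> i \notin T ->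
  dot (bnd (gen S T i)) g = g (i |: S) - g S + (g T - g (i |: T)).
Proof.
move=> HST HiT.
have HiS : i \notin S by apply: contra HiT; apply: (subsetP HST).
rewrite dot_bnd /gen !big_cons big_nil addr0 /wend /= /toggle (negPf HiS).
by rewrite !inE eqxx /= setU1K.
Qed.

Definition genB : seq {ffun vertex n -> int} :=
  [seq bnd (gen t.1.1 t.1.2 t.2) | t <- enum [pred t : vertex n * vertex n * 'I_n |
      (t.1.1 \subset t.1.2) && (t.2 \notin t.1.2)]].

Lemma completeness (D : {set vertex n}) (f : vertex n -> R) :
  ~ (exists P, path_certificate D f P) -> submodular_extendable D f.
Proof.
move=> Hno.
have HB : forall b, b \in genB -> Kw b.
  move=> b /mapP[[[S T] i] /=]; rewrite mem_enum inE /= => /andP[H1 H2] ->.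
  by exists (gen S T i); split => //; apply: gen_matched.
have Hf : forall mu, Kw mu -> (forall v, v \notin D -> mu v = 0) -> 0 <= dot mu f.
  move=> mu [P [HP <-]] Hs.
  have [P' [H1 [H2 H3]]] := rearrange HP.
  rewrite leNgt; apply/negP => Hlt; apply: Hno; exists P'; split; last split.
  - apply/allP => w Hw; case: (boolP (is_cycle w)) => //= Hnc.
    have [Ha Hb] := H3 w Hw Hnc.
    apply/andP; split; apply/negPn/negP => Hv.
      by move: Hb; rewrite Hs.
    by move: Ha; rewrite Hs.
  - exact: matched'_matched.
  - by rewrite value_bnd H2.
have [g [HgD HgB]] := @FM R _ _ Kw D f genB Kw_add erefl HB Hf.
exists g; split => // S T i HST HiT.
have : 0 <= dot (bnd (gen S T i)) g.
  apply: HgB; apply/mapP; exists (S, T, i) => //.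
  by rewrite mem_enum inE /= HST HiT.
rewrite gen_dot //; lra.
Qed.

End Final.

Unset Implicit Arguments.
Theorem lemma9 (R : realFieldType) (n : nat) (D : {set {set 'I_n}})
    (f : {set 'I_n} -> R) :
  ~ submodular_extendable D f <-> exists P : seq (walk n), path_certificate D f P.
Proof.
split.
  move=> Hne; apply: NNPP => Hno; apply: Hne; exact: completeness.
by move=> [P HP]; apply: soundness HP.
Qed.
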